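(* Let $X$ be a subspace of $\beta\omega$ with $\omega\subseteq X$. If $\operatorname{CL}(X)$ is pseudocompact, then for every cardinal $\kappa<\mathfrak h$, $\omega^\kappa$ is relatively countably compact in $X^\kappa$; consequently $X$ is $(\kappa,\omega^* )$-pseudocompact.
   Context: $\beta\omega$ is the Stone–Čech compactification of the discrete space $\omega$, $\omega^*$ its set of free ultrafilters. $\mathfrak h$ is the least cardinality of a family of open dense subsets of $([\omega]^\omega,\subseteq^* )$ with empty intersection (a family $\mathcal D\subseteq[\omega]^\omega$ is open dense if every $A\in[\omega]^\omega$ contains some $B\in\mathcal D$, and $\mathcal D$ is closed under infinite $\subseteq^*$-subsets). A subset $Y$ of $Z$ is relatively countably compact in $Z$ if every countably infinite subset of $Y$ has an accumulation point in $Z$. For $p\in\omega^*$ and sets $B_n\subseteq X$, $x$ is a $p$-limit of $(B_n)$ if $\{n:V\cap B_n\ne\emptyset\}\in p$ for each neighborhood $V$ of $x$; $X$ is $(\kappa,\omega^* )$-pseudocompact if for every family of $\kappa$ sequences of nonempty open subsets of $X$ there is a single $p\in\omega^*$ such that each sequence has a $p$-limit point in $X$. $\operatorname{CL}(X)$ is the set of nonempty closed subsets of $X$ with the Vietoris topology; pseudocompact means every continuous real-valued function is bounded. *)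

(* Defs.v *)
From Stdlib Require Import Reals List.
Open Scope R_scope.

Definition finite_set {T : Type} (A : T -> Prop) : Prop :=
  exists l : list T, forall x, A x -> In x l.
Definition infinite_set {T : Type} (A : T -> Prop) : Prop := ~ finite_set A.
Definition countably_infinite {T : Type} (Y : T -> Prop) : Prop :=
  exists f : nat -> T, (forall m n, f m = f n -> m = n) /\
                       (forall y, Y y <-> exists n, f n = y).

Definition is_ultrafilter (U : (nat -> Prop) -> Prop) : Prop :=
  U (fun _ => True) /\ ~ U (fun _ => False) /\
  (forall A B : nat -> Prop, U A -> (forall n, A n -> B n) -> U B) /\
  (forall A B : nat -> Prop, U A -> U B -> U (fun n => A n /\ B n)) /\
  (forall A : nat -> Prop, U A \/ U (fun n => ~ A n)).

Definition bw : Type := { U : (nat -> Prop) -> Prop | is_ultrafilter U }.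

Definition mem (p : bw) (A : nat -> Prop) : Prop := proj1_sig p A.

Lemma principal_uf (n : nat) : is_ultrafilter (fun A => A n).
Proof.
  repeat split; auto.
  intros A; destruct (Classical_Prop.classic (A n)); auto.
Qed.

(** the principal ultrafilter at n: the copy of n in beta omega *)
Definition pr (n : nat) : bw := exist _ (fun A => A n) (principal_uf n).

Definition omega_star (p : bw) : Prop := ~ exists n, p = pr n.

(** * Subspace topology on X ⊆ beta omega.
    The sets {p | A ∈ p} form a base of beta omega. *)
Definition open_in (X : bw -> Prop) (U : bw -> Prop) : Prop :=
  (forall p, U p -> X p) /\
  (forall p, U p -> exists A, mem p A /\ forall q, X q -> mem q A -> U q).

Definition closed_in (X : bw -> Prop) (F : bw -> Prop) : Prop :=
  (forall p, F p -> X p) /\ open_in X (fun p => X p /\ ~ F p).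

Definition CL (X : bw -> Prop) (F : bw -> Prop) : Prop :=
  closed_in X F /\ exists p, F p.

Definition vbasic (Us Vs : list (bw -> Prop)) (G : bw -> Prop) : Prop :=
  (forall U, In U Us -> forall p, G p -> U p) /\
  (forall V, In V Vs -> exists p, G p /\ V p).

Definition vietoris_open (X : bw -> Prop) (O : (bw -> Prop) -> Prop) : Prop :=
  forall F, CL X F -> O F ->
    exists Us Vs : list (bw -> Prop),
      (forall U, In U Us -> open_in X U) /\
      (forall V, In V Vs -> open_in X V) /\
      vbasic Us Vs F /\
      (forall G, CL X G -> vbasic Us Vs G -> O G).

(** * Product topology on X^K (K an index set of cardinality kappa) *)
Definition prod_space {K : Type} (X : bw -> Prop) (x : K -> bw) : Prop :=
  forall k, X (x k).

Definition prod_open {K : Type} (X : bw -> Prop) (O : (K -> bw) -> Prop) : Prop :=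
  forall x, prod_space X x -> O x ->
    exists (ks : list K) (U : K -> bw -> Prop),
      (forall k, open_in X (U k)) /\
      (forall k, In k ks -> U k (x k)) /\
      (forall y, prod_space X y -> (forall k, In k ks -> U k (y k)) -> O y).

Definition accumulation_point {T : Type} (S : T -> Prop) (op : (T -> Prop) -> Prop)
  (Y : T -> Prop) (x : T) : Prop :=
  S x /\ forall O, op O -> O x -> infinite_set (fun y => Y y /\ O y).

Definition rel_countably_compact {T : Type} (S : T -> Prop)
  (op : (T -> Prop) -> Prop) (Y : T -> Prop) : Prop :=
  forall Z, (forall y, Z y -> Y y) -> countably_infinite Z ->
    exists x, accumulation_point S op Z x.

Definition continuous_on {T : Type} (S : T -> Prop) (op : (T -> Prop) -> Prop)
  (f : T -> R) : Prop :=
  forall x, S x -> forall eps, 0 < eps ->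
    exists O, op O /\ O x /\ forall y, S y -> O y -> Rabs (f y - f x) < eps.

Definition pseudocompact {T : Type} (S : T -> Prop) (op : (T -> Prop) -> Prop) : Prop :=
  forall f : T -> R, continuous_on S op f -> exists M, forall x, S x -> Rabs (f x) <= M.

Definition almost_sub (A B : nat -> Prop) : Prop :=
  finite_set (fun n => A n /\ ~ B n).

Definition open_dense (D : (nat -> Prop) -> Prop) : Prop :=
  (forall B, D B -> infinite_set B) /\
  (forall A, infinite_set A -> exists B, D B /\ forall n, B n -> A n) /\
  (forall B C, D B -> infinite_set C -> almost_sub C B -> D C).

(** |K| < h : every family of at most |K| open dense subsets of
    ([omega]^omega, ⊆* ) has nonempty intersection *)
Definition card_lt_h (K : Type) : Prop :=
  forall D : K -> ((nat -> Prop) -> Prop), (forall k, open_dense (D k)) ->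
    exists A, infinite_set A /\ forall k, D k A.

Definition p_limit (X : bw -> Prop) (p : bw) (B : nat -> bw -> Prop) (x : bw) : Prop :=
  X x /\ forall V, open_in X V -> V x -> mem p (fun n => exists q, V q /\ B n q).

Definition kappa_omega_star_pseudocompact (K : Type) (X : bw -> Prop) : Prop :=
  forall U : K -> nat -> bw -> Prop,
    (forall k n, open_in X (U k n) /\ exists q, U k n q) ->
    exists p, omega_star p /\ forall k, exists x, p_limit X p (U k) x.

(* Main.v *)
Require Import Defs.
From Stdlib Require Import Reals List.
From Stdlib Require Import Lia Arith Classical ClassicalEpsilon FunctionalExtensionality PropExtensionality ProofIrrelevance Lra.
From mathcomp Require classical_sets filter.
Local Open Scope nat_scope.

Lemma fin_bound (A : nat -> Prop) : finite_set A -> exists M, forall n, A n -> n < M.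
Proof.
  intros [l Hl]. exists (S (fold_right max 0 l)). intros n Hn.
  specialize (Hl n Hn). clear Hn. induction l as [|a l IH]; simpl in *; [contradiction|].
  destruct Hl as [<-|Hl]; [lia|]. specialize (IH Hl). lia.
Qed.

Lemma bound_fin (A : nat -> Prop) M : (forall n, A n -> n < M) -> finite_set A.
Proof.
  intros H. exists (seq 0 M). intros n Hn. apply in_seq. specialize (H n Hn). lia.
Qed.

Lemma inf_big (A : nat -> Prop) : infinite_set A -> forall M, exists n, A n /\ M <= n.
Proof.
  intros HA M. apply NNPP. intros Hn. apply HA. apply (bound_fin _ M).
  intros n Hn'. destruct (le_lt_dec M n); [|assumption]. exfalso; apply Hn; eauto.
Qed.

Lemma big_inf (A : nat -> Prop) : (forall M, exists n, A n /\ M <= n) -> infinite_set A.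
Proof.
  intros H Hf. destruct (fin_bound _ Hf) as [M HM]. destruct (H M) as [n [Hn Hle]].
  specialize (HM n Hn). lia.
Qed.

Lemma mem_up (p : bw) (A B : nat -> Prop) : mem p A -> (forall n, A n -> B n) -> mem p B.
Proof. destruct p as [P HP]; unfold mem; simpl. destruct HP as (_&_&H&_). eauto. Qed.

Lemma mem_and (p : bw) (A B : nat -> Prop) : mem p A -> mem p B -> mem p (fun n => A n /\ B n).
Proof. destruct p as [P HP]; unfold mem; simpl. destruct HP as (_&_&_&H&_). eauto. Qed.

Lemma mem_T (p : bw) : mem p (fun _ => True).
Proof. destruct p as [P HP]; unfold mem; simpl. apply HP. Qed.

Lemma mem_nF (p : bw) : ~ mem p (fun _ => False).
Proof. destruct p as [P HP]; unfold mem; simpl. apply HP. Qed.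

Lemma mem_compl (p : bw) (A : nat -> Prop) : ~ mem p A -> mem p (fun n => ~ A n).
Proof. destruct p as [P HP]; unfold mem; simpl. destruct HP as (_&_&_&_&H).
  intros h. destruct (H A); tauto. Qed.

Lemma mem_ex (p : bw) (A : nat -> Prop) : mem p A -> exists n, A n.
Proof.
  intros H. apply NNPP; intros Hn. apply (mem_nF p). apply (mem_up _ _ _ H).
  intros n Hn'; apply Hn; eauto.
Qed.

Lemma mem_not_both (p : bw) (A : nat -> Prop) : mem p A -> mem p (fun n => ~ A n) -> False.
Proof.
  intros H1 H2. destruct (mem_ex _ _ (mem_and _ _ _ H1 H2)) as [n [a b]]; auto.
Qed.

Lemma bw_ext (p q : bw) : (forall A, mem p A -> mem q A) -> p = q.
Proof.
  intros H.
  assert (E : proj1_sig p = proj1_sig q).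
  { apply functional_extensionality; intros A. apply propositional_extensionality.
    split; [apply H|]. intros Hq. apply NNPP; intros Hp.
    apply (mem_not_both q A Hq). apply H. apply mem_compl; exact Hp. }
  destruct p as [P HP], q as [Q HQ]; simpl in E; subst Q.
  f_equal; apply proof_irrelevance.
Qed.

Lemma mem_pr_single (q : bw) m : mem q (fun n => n = m) -> q = pr m.
Proof.
  intros H. apply bw_ext. intros A HA. unfold mem, pr; simpl.
  apply NNPP; intros Hn. apply (mem_nF q). apply (mem_up _ _ _ (mem_and _ _ _ H HA)).
  intros n [-> a]; auto.
Qed.

Lemma pr_inj a b : pr a = pr b -> a = b.
Proof.
  intros H. assert (h : mem (pr a) (fun n => n = a)) by reflexivity.
  rewrite H in h. exact (eq_sym h).
Qed.

Lemma mem_interval (q : bw) a b : mem q (fun n => a <= n < b) -> exists m, a <= m < b /\ q = pr m.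
Proof.
  induction b as [|b IH]; intros H.
  - exfalso. apply (mem_nF q). apply (mem_up _ _ _ H). intros; lia.
  - destruct (classic (mem q (fun n => n = b))) as [Hb|Hb].
    + exists b. split; [|apply mem_pr_single; auto].
      destruct (mem_ex _ _ (mem_and _ _ _ H Hb)) as [n [h1 h2]]. lia.
    + destruct IH as [m [h1 h2]].
      * apply (mem_up _ _ _ (mem_and _ _ _ H (mem_compl _ _ Hb))). intros n [h1 h2]. lia.
      * exists m. split; [lia|auto].
Qed.

Lemma free_bound (p : bw) M : omega_star p -> ~ mem p (fun n => n < M).
Proof.
  intros Hp H. destruct (mem_interval p 0 M) as [m [_ Hm]].
  - apply (mem_up _ _ _ H). intros; lia.
  - apply Hp; eauto.
Qed.

Lemma free_fin (p : bw) A : omega_star p -> finite_set A -> ~ mem p A.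
Proof.
  intros Hp Hf H. destruct (fin_bound _ Hf) as [M HM]. apply (free_bound p M Hp).
  apply (mem_up _ _ _ H). auto.
Qed.

Lemma img_uf (f : nat -> nat) (p : bw) : is_ultrafilter (fun A => mem p (fun n => A (f n))).
Proof.
  repeat split.
  - apply mem_T.
  - apply mem_nF.
  - intros A B HA HAB. apply (mem_up _ _ _ HA). auto.
  - intros A B HA HB. apply (mem_and _ _ _ HA HB).
  - intros A. destruct (classic (mem p (fun n => A (f n)))); [auto|right].
    apply mem_compl. auto.
Qed.

Definition img (f : nat -> nat) (p : bw) : bw := exist _ _ (img_uf f p).

Lemma mem_fin_inter {K : Type} (p : bw) (P : K -> nat -> Prop) (ks : list K) :
  (forall k, In k ks -> mem p (P k)) -> mem p (fun n => forall k, In k ks -> P k n).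
Proof.
  induction ks as [|a ks IH]; intros H.
  - apply (mem_up _ _ _ (mem_T p)). intros n _ k [].
  - apply (mem_up _ _ _ (mem_and _ _ _ (H a (or_introl eq_refl)) (IH (fun k h => H k (or_intror h))))).
    intros n [h1 h2] k [<-|hk]; auto.
Qed.

Lemma open_basic X (A : nat -> Prop) : open_in X (fun q => X q /\ mem q A).
Proof.
  split; [intros p [h _]; exact h|]. intros p [_ h]. exists A. split; auto.
Qed.

Lemma open_dense_omega X (HomegaX : forall n, X (pr n)) U q :
  open_in X U -> U q -> exists m, U (pr m).
Proof.
  intros [_ HU] Hq. destruct (HU q Hq) as [A [HA HA']].
  destruct (mem_ex _ _ HA) as [m Hm]. exists m. apply HA'; auto.
Qed.

Lemma fchoice {A B : Type} (R : A -> B -> Prop) : (forall x, exists y, R x y) -> exists f, forall x, R x (f x).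
Proof.
  intros H. exists (fun x => proj1_sig (constructive_indefinite_description _ (H x))).
  intros x. exact (proj2_sig (constructive_indefinite_description _ (H x))).
Qed.

Definition Good (f : nat -> nat) (C : nat -> Prop) : Prop :=
  (exists M N, forall n, C n -> N <= n -> f n = M) \/
  (exists N, forall n m, C n -> C m -> N <= n -> N <= m ->
      ~ (n < m /\ m <= f n) /\ ~ (f n < m /\ m < n)).

Lemma good_almost f B C : Good f B -> almost_sub C B -> Good f C.
Proof.
  intros HB Hs. destruct (fin_bound _ Hs) as [L HL].
  assert (HCB : forall n, C n -> L <= n -> B n).
  { intros n Hn Hl. apply NNPP; intros Hb. specialize (HL n (conj Hn Hb)). lia. }
  destruct HB as [[M [N H]]|[N H]].
  - left. exists M, (max N L). intros n Hn Hl. apply H; [apply HCB|]; auto; lia.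
  - right. exists (max N L). intros n m Hn Hm h1 h2. apply H; try apply HCB; auto; lia.
Qed.

Lemma fib_bound (A : nat -> Prop) (f : nat -> nat) :
  (forall M, finite_set (fun n => A n /\ f n = M)) ->
  forall a, exists L, forall n, A n -> f n <= a -> n < L.
Proof.
  intros H a. induction a as [|a IH].
  - destruct (fin_bound _ (H 0)) as [L HL]. exists L. intros n Hn Hf. apply HL. split; auto; lia.
  - destruct IH as [L1 H1]. destruct (fin_bound _ (H (S a))) as [L2 H2].
    exists (max L1 L2). intros n Hn Hf.
    destruct (Nat.eq_dec (f n) (S a)) as [e|e].
    + specialize (H2 n (conj Hn e)). lia.
    + specialize (H1 n Hn ltac:(lia)). lia.
Qed.

Lemma dense_good (f : nat -> nat) (A : nat -> Prop) : infinite_set A ->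
  exists B, (infinite_set B /\ Good f B) /\ forall n, B n -> A n.
Proof.
  intros HA.
  destruct (classic (exists M, infinite_set (fun n => A n /\ f n = M))) as [[M HM]|HM].
  - exists (fun n => A n /\ f n = M). split; [split; auto|].
    + left. exists M, 0. intros n [_ h] _; auto.
    + intros n [h _]; auto.
  - assert (Hfin : forall M, finite_set (fun n => A n /\ f n = M)).
    { intros M. apply NNPP. intros h. apply HM. exists M. exact h. }
    assert (Hch : forall ab : nat * nat, exists n, A n /\ snd ab <= n /\ fst ab <= f n).
    { intros [a b]. simpl. destruct (fib_bound _ _ Hfin a) as [L HL].
      destruct (inf_big _ HA (max b L)) as [n [Hn Hle]]. exists n. split; [auto|split; [lia|]].
      destruct (le_lt_dec a (f n)) as [h|h]; [auto|]. specialize (HL n Hn ltac:(lia)). lia. }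
    destruct (fchoice _ Hch) as [ch Hc].
    set (s := fix s j := match j with 0 => ch (0,0) | S j => ch (s j, S (max (s j) (f (s j)))) end).
    assert (Hs0 : forall j, A (s j)).
    { intros [|j]; simpl; apply Hc. }
    assert (HsS : forall j, s (S j) = ch (s j, S (max (s j) (f (s j))))) by reflexivity.
    assert (Hlt : forall j, s j < s (S j) /\ f (s j) < s (S j) /\ s j <= f (s (S j))).
    { intros j. rewrite HsS. destruct (Hc (s j, S (max (s j) (f (s j))))) as (_&h1&h2). simpl in *. lia. }
    assert (Hmono : forall j j', j < j' -> s (S j) <= s j').
    { intros j j' h. induction h as [|j' h IH]; [lia|]. specialize (Hlt j'). lia. }
    assert (Hge : forall j, j <= s j).
    { induction j as [|j IH]; [lia|]. specialize (Hlt j). lia. }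
    exists (fun n => exists j, s j = n). split; [split|].
    + apply big_inf. intros M. exists (s M). split; eauto.
    + right. exists 0. intros n m [j <-] [j' <-] _ _. split.
      * intros [h1 h2]. destruct (lt_eq_lt_dec j j') as [[h|h]|h].
        -- specialize (Hmono j j' h). specialize (Hlt j). lia.
        -- subst; lia.
        -- specialize (Hmono j' j h). specialize (Hlt j'). lia.
      * intros [h1 h2]. destruct (lt_eq_lt_dec j' j) as [[h|h]|h].
        -- destruct j as [|j]; [lia|]. assert (s j' <= s j).
           { destruct (Nat.eq_dec j' j) as [->|ne]; [lia|]. specialize (Hmono j' j ltac:(lia)). specialize (Hlt j'). lia. }
           specialize (Hlt j). lia.
        -- subst; lia.
        -- specialize (Hmono j j' h). specialize (Hlt j). lia.
    + intros n [j <-]. auto.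
Qed.

Lemma h_step (K : Type) (g : K -> nat -> nat) : card_lt_h K ->
  exists C, infinite_set C /\ forall k, Good (g k) C.
Proof.
  intros Hh. destruct (Hh (fun k B => infinite_set B /\ Good (g k) B)) as [C [HC HCk]].
  - intros k. split; [|split].
    + intros B [h _]; auto.
    + intros A HA. apply dense_good; auto.
    + intros B C [_ HB] HC Hs. split; auto. eapply good_almost; eauto.
  - exists C. split; auto. intros k; apply HCk.
Qed.

Lemma enum_inf (C : nat -> Prop) : infinite_set C ->
  exists c : nat -> nat, (forall i, C (c i)) /\ (forall i j, i < j -> c i < c j) /\ (forall i, i <= c i).
Proof.
  intros HC. destruct (fchoice _ (inf_big _ HC)) as [nx Hnx].
  set (c := fix c i := match i with 0 => nx 0 | S i => nx (S (c i)) end).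
  assert (HS : forall i, c i < c (S i)).
  { intros i. simpl. specialize (Hnx (S (c i))). lia. }
  exists c. split; [|split].
  - intros [|i]; simpl; apply Hnx.
  - intros i j h. induction h as [|j h IH]; [apply HS|]. specialize (HS j). lia.
  - induction i as [|i IH]; [lia|]. specialize (HS i). lia.
Qed.

Definition J (c : nat -> nat) i m := c (2*i) <= m < c (2*i+2).
Definition JS (c : nat -> nat) i (q : bw) := exists m, J c i m /\ q = pr m.

Lemma mono_le (c : nat -> nat) : (forall i j, i < j -> c i < c j) -> forall i j, i <= j -> c i <= c j.
Proof. intros H i j h. destruct (Nat.eq_dec i j) as [->|ne]; [lia|]. specialize (H i j ltac:(lia)). lia. Qed.

Lemma J_disj c (Hc : forall i j, i < j -> c i < c j) i j m : J c i m -> J c j m -> i = j.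
Proof.
  unfold J. intros h1 h2. destruct (lt_eq_lt_dec i j) as [[h|h]|h]; auto.
  - pose proof (mono_le c Hc (2*i+2) (2*j) ltac:(lia)). lia.
  - pose proof (mono_le c Hc (2*j+2) (2*i) ltac:(lia)). lia.
Qed.

Lemma J_ne c (Hc : forall i j, i < j -> c i < c j) i : J c i (c (2*i)).
Proof. unfold J. specialize (Hc (2*i) (2*i+2) ltac:(lia)). lia. Qed.

Lemma JS_uniq c (Hc : forall i j, i < j -> c i < c j) i j :
  (forall q, JS c i q <-> JS c j q) -> i = j.
Proof.
  intros H. destruct (proj1 (H (pr (c (2*i)))) (ex_intro _ _ (conj (J_ne c Hc i) eq_refl))) as [m [Hm E]].
  apply pr_inj in E. subst m. apply (J_disj c Hc i j _ (J_ne c Hc i) Hm).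
Qed.

Lemma mem_J_JS c (q : bw) i : mem q (J c i) -> JS c i q.
Proof.
  intros H. destruct (mem_interval q (c (2*i)) (c (2*i+2)) H) as [m [h1 h2]].
  exists m. split; auto.
Qed.

Lemma JS_CL X (HomegaX : forall n, X (pr n)) c (Hc : forall i j, i < j -> c i < c j) i : CL X (JS c i).
Proof.
  split.
  - split.
    + intros q [m [_ ->]]. auto.
    + split; [intros q [h _]; auto|]. intros q [Xq nq]. exists (fun n => ~ J c i n). split.
      * apply mem_compl. intros h. apply nq. apply mem_J_JS; auto.
      * intros q' Xq' h. split; auto. intros [m [Hm ->]]. apply h. exact Hm.
  - exists (pr (c (2*i))). exists (c (2*i)). split; auto. apply J_ne; auto.
Qed.

Lemma vbasic_app Us1 Us2 Vs1 Vs2 G :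
  vbasic Us1 Vs1 G -> vbasic Us2 Vs2 G -> vbasic (Us1 ++ Us2) (Vs1 ++ Vs2) G.
Proof.
  intros [a1 b1] [a2 b2]. split.
  - intros U HU. apply in_app_or in HU. destruct HU; [exact (a1 U H)|exact (a2 U H)].
  - intros V HV. apply in_app_or in HV. destruct HV; [exact (b1 V H)|exact (b2 V H)].
Qed.

Lemma vbasic_app_inv Us1 Us2 Vs1 Vs2 G :
  vbasic (Us1 ++ Us2) (Vs1 ++ Vs2) G -> vbasic Us1 Vs1 G /\ vbasic Us2 Vs2 G.
Proof.
  intros [a b]. split; split.
  - intros U HU. apply (a U). apply in_or_app; auto.
  - intros V HV. apply (b V). apply in_or_app; auto.
  - intros U HU. apply (a U). apply in_or_app; auto.
  - intros V HV. apply (b V). apply in_or_app; auto.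
Qed.

Lemma vbasic_ext Us Vs G H : (forall q, G q <-> H q) -> vbasic Us Vs G -> vbasic Us Vs H.
Proof.
  intros E [a b]. split.
  - intros U HU q Hq. apply (a U HU). apply E; auto.
  - intros V HV. destruct (b V HV) as [q [h1 h2]]. exists q. split; auto. apply E; auto.
Qed.

Lemma vo_vbasic X Us Vs : (forall U, In U Us -> open_in X U) -> (forall V, In V Vs -> open_in X V) ->
  vietoris_open X (vbasic Us Vs).
Proof. intros HU HV F _ HF. exists Us, Vs. auto. Qed.

Lemma vo_and X O1 O2 : vietoris_open X O1 -> vietoris_open X O2 -> vietoris_open X (fun G => O1 G /\ O2 G).
Proof.
  intros H1 H2 F HF [h1 h2].
  destruct (H1 F HF h1) as (Us1 & Vs1 & a1 & b1 & c1 & d1).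
  destruct (H2 F HF h2) as (Us2 & Vs2 & a2 & b2 & c2 & d2).
  exists (Us1 ++ Us2), (Vs1 ++ Vs2). split; [|split; [|split]].
  - intros U HU; apply in_app_or in HU; destruct HU; auto.
  - intros V HV; apply in_app_or in HV; destruct HV; auto.
  - apply vbasic_app; auto.
  - intros G HG Hb. apply vbasic_app_inv in Hb. destruct Hb. auto.
Qed.

Lemma vo_T X : vietoris_open X (fun _ => True).
Proof. intros F _ _. exists nil, nil. repeat split; simpl; try tauto. Qed.

Lemma vo_ext X O G H : vietoris_open X O -> CL X G -> O G -> (forall q, G q <-> H q) -> CL X H -> O H.
Proof.
  intros HO HG OG E HH. destruct (HO G HG OG) as (Us & Vs & _ & _ & hb & hO).
  apply hO; auto. eapply vbasic_ext; eauto.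
Qed.

Lemma sep_one X c i G : CL X G -> ~ (forall q, G q <-> JS c i q) ->
  exists Us Vs, (forall U, In U Us -> open_in X U) /\ (forall V, In V Vs -> open_in X V) /\
   vbasic Us Vs G /\ forall H, vbasic Us Vs H -> ~ (forall q, H q <-> JS c i q).
Proof.
  intros [[GX _] _] Hn.
  assert (Hq : exists q, ~ (G q <-> JS c i q)).
  { apply NNPP; intros h. apply Hn. intros q. apply NNPP; intros h'. apply h; eauto. }
  destruct Hq as [q Hq].
  destruct (classic (G q)) as [Gq|Gq].
  - assert (nJ : ~ JS c i q) by tauto.
    exists nil, ((fun q' => X q' /\ mem q' (fun n => ~ J c i n)) :: nil).
    split; [simpl; tauto|split; [|split]].
    + intros V [<-|[]]. apply open_basic.
    + split; [simpl; tauto|]. intros V [<-|[]]. exists q. split; auto. split; auto.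
      apply mem_compl. intros h. apply nJ. apply mem_J_JS; auto.
    + intros H [_ hb] E. destruct (hb _ (or_introl eq_refl)) as [q' [Hq' [_ hm]]].
      apply E in Hq'. destruct Hq' as [m [Jm ->]]. apply hm. exact Jm.
  - assert (Jq : JS c i q) by tauto. destruct Jq as [m [Jm ->]].
    exists ((fun q' => X q' /\ mem q' (fun n => n <> m)) :: nil), nil.
    split; [|split; [simpl; tauto|split]].
    + intros U [<-|[]]. apply open_basic.
    + split; [|simpl; tauto]. intros U [<-|[]] q' Gq'. split; auto.
      apply mem_compl. intros h. apply mem_pr_single in h. subst q'. auto.
    + intros H [hb _] E. assert (Hm : H (pr m)) by (apply E; exists m; auto).
      destruct (hb _ (or_introl eq_refl) _ Hm) as [_ h]. apply h. reflexivity.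
Qed.

Lemma sep_list X c G (l : list nat) : CL X G -> (forall i, In i l -> ~ (forall q, G q <-> JS c i q)) ->
  exists Us Vs, (forall U, In U Us -> open_in X U) /\ (forall V, In V Vs -> open_in X V) /\
   vbasic Us Vs G /\ forall H, vbasic Us Vs H -> forall i, In i l -> ~ (forall q, H q <-> JS c i q).
Proof.
  intros HG. induction l as [|a l IH]; intros Hl.
  - exists nil, nil. repeat split; simpl; tauto.
  - destruct (sep_one X c a G HG (Hl a (or_introl eq_refl))) as (Us1 & Vs1 & a1 & b1 & c1 & d1).
    destruct IH as (Us2 & Vs2 & a2 & b2 & c2 & d2). { intros i hi; apply Hl; right; auto. }
    exists (Us1 ++ Us2), (Vs1 ++ Vs2). split; [|split; [|split]].
    + intros U HU; apply in_app_or in HU; destruct HU; auto.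
    + intros V HV; apply in_app_or in HV; destruct HV; auto.
    + apply vbasic_app; auto.
    + intros H Hb. apply vbasic_app_inv in Hb. destruct Hb as [e1 e2].
      intros i [<-|hi]; [apply d1|apply d2]; auto.
Qed.

Lemma iso_JS X c i : vietoris_open X (fun H => forall q, H q <-> JS c i q).
Proof.
  intros F HF EF. destruct HF as [[HFX _] _].
  exists ((fun q => X q /\ mem q (J c i)) :: nil),
         (map (fun m => fun q => X q /\ mem q (fun n => n = m)) (seq (c (2*i)) (c (2*i+2) - c (2*i)))).
  split; [|split; [|split]].
  - intros U [<-|[]]. apply open_basic.
  - intros V HV. apply in_map_iff in HV. destruct HV as [m [<- _]]. apply open_basic.
  - split.
    + intros U [<-|[]] q Fq. split; [apply HFX; auto|]. apply EF in Fq. destruct Fq as [m [Jm ->]]. exact Jm.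
    + intros V HV. apply in_map_iff in HV. destruct HV as [m [<- Hm]]. apply in_seq in Hm.
      exists (pr m). split; [apply EF; exists m; split; [unfold J; lia|auto]|]. split; [apply HFX; apply EF; exists m; split; [unfold J; lia|auto]|reflexivity].
  - intros G HG [hU hV] q. split.
    + intros Gq. destruct (hU _ (or_introl eq_refl) q Gq) as [_ h]. apply mem_J_JS; auto.
    + intros [m [Jm ->]].
      destruct (hV (fun q => X q /\ mem q (fun n => n = m))) as [q' [Gq' [_ h]]].
      * apply in_map_iff. exists m. split; auto. apply in_seq. unfold J in Jm. lia.
      * apply mem_pr_single in h. subst; auto.
Qed.

Lemma fval_exists c (Hc : forall i j, i < j -> c i < c j) (G : bw -> Prop) :
  exists r : R, (forall i, (forall q, G q <-> JS c i q) -> r = INR i) /\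
                (~ (exists i, forall q, G q <-> JS c i q) -> r = 0%R).
Proof.
  destruct (classic (exists i, forall q, G q <-> JS c i q)) as [[i Ei]|Hn].
  - exists (INR i). split; [|intros h; exfalso; apply h; eauto]. intros j Ej. f_equal. apply (JS_uniq c Hc).
    intros q. rewrite <- Ei, <- Ej. tauto.
  - exists 0%R. split; [|auto]. intros j Ej. exfalso; eauto.
Qed.

Definition fval c Hc G : R := proj1_sig (constructive_indefinite_description _ (fval_exists c Hc G)).

Lemma fval_spec c Hc G : (forall i, (forall q, G q <-> JS c i q) -> fval c Hc G = INR i) /\
                (~ (exists i, forall q, G q <-> JS c i q) -> fval c Hc G = 0%R).
Proof. unfold fval. exact (proj2_sig (constructive_indefinite_description _ (fval_exists c Hc G))). Qed.

Lemma accum X (HomegaX : forall n, X (pr n)) c (Hc : forall i j, i < j -> c i < c j)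
  (Hps : pseudocompact (CL X) (vietoris_open X)) :
  exists F, CL X F /\ forall O, vietoris_open X O -> O F -> infinite_set (fun i => O (JS c i)).
Proof.
  apply NNPP; intros Hn.
  assert (H : forall F, CL X F -> exists O, vietoris_open X O /\ O F /\ finite_set (fun i => O (JS c i))).
  { intros F HF. apply NNPP; intros h. apply Hn. exists F. split; auto.
    intros O HO OF hi. apply h. exists O. split; auto. }
  clear Hn.
  destruct (Hps (fval c Hc)) as [Mb HMb].
  - intros G HG eps Heps.
    destruct (classic (exists i, forall q, G q <-> JS c i q)) as [[i Ei]|Hne].
    + exists (fun H0 => forall q, H0 q <-> JS c i q). split; [apply iso_JS|split; auto].
      intros H0 HH EH. rewrite (proj1 (fval_spec c Hc H0) i EH), (proj1 (fval_spec c Hc G) i Ei).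
      unfold Rminus. rewrite Rplus_opp_r, Rabs_R0. auto.
    + destruct (H G HG) as (O & HO & OG & Hfin). destruct (fin_bound _ Hfin) as [M HM].
      exists (fun H0 => O H0 /\ ~ (exists i, forall q, H0 q <-> JS c i q)). split; [|split; [split; auto|]].
      * intros F' HF' [OF' nF'].
        destruct (HO F' HF' OF') as (Us1 & Vs1 & a1 & b1 & c1 & d1).
        destruct (sep_list X c F' (seq 0 M) HF' (fun i _ h => nF' (ex_intro _ i h))) as (Us2 & Vs2 & a2 & b2 & c2 & d2).
        exists (Us1 ++ Us2), (Vs1 ++ Vs2). split; [|split; [|split]].
        -- intros U HU; apply in_app_or in HU; destruct HU; auto.
        -- intros V HV; apply in_app_or in HV; destruct HV; auto.
        -- apply vbasic_app; auto.
        -- intros G' HG' Hb. apply vbasic_app_inv in Hb. destruct Hb as [e1 e2].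
           assert (OG' : O G') by auto. split; auto. intros [j Ej].
           assert (OJ : O (JS c j)) by (apply (vo_ext X O G' (JS c j) HO HG' OG' Ej); apply JS_CL; auto).
           specialize (HM j OJ). apply (d2 G' e2 j); auto. apply in_seq. lia.
      * intros H' HH' [_ nH']. rewrite (proj2 (fval_spec c Hc H') nH'), (proj2 (fval_spec c Hc G) Hne).
        unfold Rminus. rewrite Rplus_opp_r, Rabs_R0. auto.
  - destruct (INR_unbounded Mb) as [i Hi].
    specialize (HMb (JS c i) (JS_CL X HomegaX c Hc i)).
    rewrite (proj1 (fval_spec c Hc (JS c i)) i (fun q => iff_refl _)) in HMb.
    rewrite Rabs_right in HMb; [|apply Rle_ge, pos_INR]. lra.
Qed.
Lemma uf_ext (Fil : (nat -> Prop) -> Prop) :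
  (forall A B, Fil A -> (forall n, A n -> B n) -> Fil B) ->
  (forall A B, Fil A -> Fil B -> Fil (fun n => A n /\ B n)) ->
  Fil (fun _ => True) ->
  (forall A, Fil A -> exists n, A n) ->
  exists p : bw, forall A, Fil A -> mem p A.
Proof.
  intros Hup Hint HT Hne.
  assert (PF : @mathcomp.classical.filter.ProperFilter nat Fil).
  { constructor.
    - intros H. destruct (Hne _ H) as [n Hn]. exact Hn.
    - constructor.
      + exact HT.
      + intros A B HA HB. apply (Hup _ _ (Hint _ _ HA HB)). intros n [a b]; split; assumption.
      + intros P Q HPQ HP. apply (Hup _ _ HP). exact HPQ. }
  destruct (mathcomp.classical.filter.ultraFilterLemma PF) as [G [UG sub]].
  assert (PG := @mathcomp.classical.filter.ultra_proper _ _ UG).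
  assert (FG := @mathcomp.classical.filter.filter_filter _ _ PG).
  assert (Hu : is_ultrafilter G).
  { repeat split.
    - exact (@mathcomp.classical.filter.filterT _ _ FG).
    - intro H. apply (@mathcomp.classical.filter.filter_not_empty _ G PG).
      apply (@mathcomp.classical.filter.filterS _ _ FG _ _ (fun x (h : False) => h) H).
    - intros A B HA HAB. exact (@mathcomp.classical.filter.filterS _ _ FG _ _ HAB HA).
    - intros A B HA HB. exact (@mathcomp.classical.filter.filterI _ _ FG _ _ HA HB).
    - intros A. exact (mathcomp.classical.filter.in_ultra_setVsetC A UG). }
  exists (exist _ G Hu). intros A HA. exact (sub A HA).
Qed.

Lemma sep_final X c (Hc : forall i j, i < j -> c i < c j) F (HF : CL X F) (p : bw)
  (Hp_ge : forall M, mem p (fun i => M <= i))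
  (Hp_O : forall O, vietoris_open X O -> O F -> mem p (fun i => O (JS c i)))
  (phi : nat -> nat) i0 (Hphi : forall i, i0 <= i -> J c i (phi i)) : X (img phi p).
Proof.
  destruct HF as [[FX _] _].
  apply NNPP; intros nX.
  set (R := fun m => exists i, i0 <= i /\ phi i = m).
  assert (HA : forall q, F q -> ~ mem q R).
  { intros q Fq HqR. apply nX.
    assert (E : q = img phi p).
    { apply bw_ext. intros D HD.
      set (V := fun q' => X q' /\ mem q' (fun n => D n /\ R n)).
      assert (HO : vietoris_open X (vbasic nil (V :: nil))).
      { apply vo_vbasic; [simpl; tauto|]. intros V' [<-|[]]. apply open_basic. }
      assert (OF : vbasic nil (V :: nil) F).
      { split; [simpl; tauto|]. intros V' [<-|[]]. exists q. split; auto. split; auto.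
        apply mem_and; auto. }
      apply (mem_up _ _ _ (mem_and _ _ _ (Hp_O _ HO OF) (Hp_ge i0))).
      intros i [[_ hV] hi]. destruct (hV V (or_introl eq_refl)) as [q' [[m [Jm ->]] [_ hm]]].
      destruct hm as [Dm [i' [hi' <-]]].
      assert (i' = i) by (apply (J_disj c Hc i' i (phi i')); auto). subst i'. exact Dm. }
    rewrite <- E. auto. }
  set (U := fun q => X q /\ mem q (fun n => ~ R n)).
  assert (HO : vietoris_open X (vbasic (U :: nil) nil)).
  { apply vo_vbasic; [|simpl; tauto]. intros U' [<-|[]]. apply open_basic. }
  assert (OF : vbasic (U :: nil) nil F).
  { split; [|simpl; tauto]. intros U' [<-|[]] q Fq. split; auto. apply mem_compl. apply HA; auto. }
  destruct (mem_ex _ _ (mem_and _ _ _ (Hp_O _ HO OF) (Hp_ge i0))) as [i [[hU _] hi]].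
  destruct (hU U (or_introl eq_refl) (pr (phi i))) as [_ h].
  - exists (phi i). split; auto.
  - apply h. exists i. auto.
Qed.

Lemma core X (HomegaX : forall n, X (pr n)) (Hps : pseudocompact (CL X) (vietoris_open X))
  (K : Type) (Hh : card_lt_h K) (g : K -> nat -> nat) :
  exists p, omega_star p /\ forall k, X (img (g k) p).
Proof.
  destruct (h_step K g Hh) as [C [HC HCg]].
  destruct (enum_inf C HC) as [c [HcC [Hc Hge]]].
  destruct (accum X HomegaX c Hc Hps) as [F [HF HFacc]].
  set (Fil := fun N : nat -> Prop => exists O, vietoris_open X O /\ O F /\
                 exists M, forall i, O (JS c i) -> M <= i -> N i).
  destruct (uf_ext Fil) as [p Hp].
  - intros A B [O [HO [OF [M HM]]]] HAB. exists O. split; auto. split; auto. exists M. auto.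
  - intros A B [O1 [HO1 [OF1 [M1 HM1]]]] [O2 [HO2 [OF2 [M2 HM2]]]].
    exists (fun G => O1 G /\ O2 G). split; [apply vo_and; auto|]. split; [auto|].
    exists (max M1 M2). intros i [h1 h2] hi. split; [apply HM1|apply HM2]; auto; lia.
  - exists (fun _ => True). split; [apply vo_T|]. split; auto. exists 0. auto.
  - intros A [O [HO [OF [M HM]]]]. destruct (inf_big _ (HFacc O HO OF) M) as [i [h1 h2]]. eauto.
  - assert (Hp_ge : forall M, mem p (fun i => M <= i)).
    { intros M. apply Hp. exists (fun _ => True). split; [apply vo_T|]. split; auto. exists M. auto. }
    assert (Hp_O : forall O, vietoris_open X O -> O F -> mem p (fun i => O (JS c i))).
    { intros O HO OF. apply Hp. exists O. split; auto. split; auto. exists 0. auto. }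
    exists (img (fun i => c (2*i+1)) p). split.
    + intros [n E]. assert (h : mem (img (fun i => c (2*i+1)) p) (fun m => m = n)) by (rewrite E; reflexivity).
      change (mem p (fun i => c (2*i+1) = n)) in h.
      destruct (mem_ex _ _ (mem_and _ _ _ h (Hp_ge (S n)))) as [i [h1 h2]].
      specialize (Hge (2*i+1)). lia.
    + intros k.
      assert (E : img (g k) (img (fun i => c (2*i+1)) p) = img (fun i => g k (c (2*i+1))) p).
      { apply bw_ext. intros A HA. exact HA. }
      rewrite E. destruct (HCg k) as [[M [N H]]|[N H]].
      * assert (E2 : img (fun i => g k (c (2*i+1))) p = pr M).
        { apply mem_pr_single. apply (mem_up _ _ _ (Hp_ge N)). intros i hi. cbv beta.
          apply H; auto. specialize (Hge (2*i+1)). lia. }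
        rewrite E2. auto.
      * apply (sep_final X c Hc F HF p Hp_ge Hp_O _ N). intros i hi. unfold J.
        pose proof (Hge (2*i)) as g1. pose proof (Hc (2*i) (2*i+1) ltac:(lia)) as g2.
        pose proof (Hc (2*i+1) (2*i+2) ltac:(lia)) as g3.
        destruct (H (c (2*i+1)) (c (2*i)) (HcC _) (HcC _) ltac:(lia) ltac:(lia)) as [_ h1].
        destruct (H (c (2*i+1)) (c (2*i+2)) (HcC _) (HcC _) ltac:(lia) ltac:(lia)) as [h2 _].
        lia.
Qed.

Lemma inj_fin {T : Type} (e : nat -> T) (He : forall m n, e m = e n -> m = n) (l : list T) :
  finite_set (fun n => In (e n) l).
Proof.
  induction l as [|a l [l' Hl']].
  - exists nil. intros n [].
  - destruct (classic (exists n0, e n0 = a)) as [[n0 E]|Hn].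
    + exists (n0 :: l'). intros n [h|h]; [left; apply He; congruence|right; auto].
    + exists l'. intros n [h|h]; [exfalso; eauto|auto].
Qed.

Theorem theorem4p1 (X : bw -> Prop) (HomegaX : forall n : nat, X (pr n)) :
  pseudocompact (CL X) (vietoris_open X) ->
  forall K : Type, card_lt_h K ->
    rel_countably_compact (@prod_space K X) (@prod_open K X)
      (fun x : K -> bw => forall k, exists n : nat, x k = pr n)
    /\ kappa_omega_star_pseudocompact K X.
Proof.
  intros Hps K Hh. split.
  - intros Z HZ [e [He HZe]].
    assert (Hg : forall kn : K * nat, exists m, e (snd kn) (fst kn) = pr m).
    { intros [k n]. apply (HZ (e n)). apply HZe. eauto. }
    destruct (fchoice _ Hg) as [g0 Hg0].
    set (g := fun k n => g0 (k, n)).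
    assert (Hgk : forall k n, e n k = pr (g k n)) by (intros k n; exact (Hg0 (k, n))).
    destruct (core X HomegaX Hps K Hh g) as [p [Hfree HX]].
    exists (fun k => img (g k) p). split; [intros k; apply HX|].
    intros O HO Oy.
    destruct (HO _ HX Oy) as (ks & U & HUo & HUy & HOU).
    assert (Hk : forall k, In k ks -> mem p (fun n => U k (e n k))).
    { intros k hk. destruct (proj2 (HUo k) _ (HUy k hk)) as [A [HA HA']].
      change (mem p (fun n => A (g k n))) in HA.
      apply (mem_up _ _ _ HA). intros n hn. rewrite Hgk. apply HA'; auto. }
    pose proof (mem_fin_inter p _ ks Hk) as Hall.
    intros [l Hl]. apply (free_fin p _ Hfree (inj_fin e He l)).
    apply (mem_up _ _ _ Hall). intros n hn. apply Hl. split.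
    + apply HZe. eauto.
    + apply HOU; auto. intros k. rewrite Hgk. auto.
  - intros U HU.
    assert (Hg : forall kn : K * nat, exists m, U (fst kn) (snd kn) (pr m)).
    { intros [k n]. destruct (HU k n) as [Ho [q Hq]]. eapply open_dense_omega; eauto. }
    destruct (fchoice _ Hg) as [g0 Hg0].
    set (g := fun k n => g0 (k, n)).
    assert (Hgk : forall k n, U k n (pr (g k n))) by (intros k n; exact (Hg0 (k, n))).
    destruct (core X HomegaX Hps K Hh g) as [p [Hfree HX]].
    exists p. split; auto. intros k. exists (img (g k) p). split; auto.
    intros V HV Vx. destruct (proj2 HV _ Vx) as [A [HA HA']].
    change (mem p (fun n => A (g k n))) in HA.
    apply (mem_up _ _ _ HA). intros n hn. exists (pr (g k n)). split; auto.
Qed.
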